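(* Let $n\ge1$ and let $\Phi=\Phi(A,O,Y,\bar{\mathbf d})$ be an $n$-mode Gaussian superchannel, with $A=(a_{kl})$, $Y=(y_{kl})$ and $\bar{\mathbf d}=(\bar d_1,\dots,\bar d_{2n})^{\mathrm T}$. Then $\Phi$ is imaginarity breaking (i.e. $\Phi(\phi)$ is a real Gaussian channel for every $n$-mode Gaussian channel $\phi$) if and only if $\bar d_{2k}=0$, $y_{2k-1,2l}=0$ and $a_{2k,2l-1}=a_{2k,2l}=0$ for all $k,l\in\{1,\dots,n\}$.
   Context: Fix $n\ge1$. Let $\Delta_n=\bigoplus_{k=1}^n\begin{pmatrix}0&1\\-1&0\end{pmatrix}$ and $\Sigma_n=\bigoplus_{k=1}^n\begin{pmatrix}1&0\\0&-1\end{pmatrix}$ (both $2n\times2n$). An $n$-mode Gaussian channel is identified with a triple $\phi=\phi(T,N,\mathbf d)$, where $T=(t_{kl})$ and $N=(n_{kl})$ are real $2n\times 2n$ matrices with $N=N^{\mathrm T}\ge0$, $\mathbf d=(d_1,\dots,d_{2n})^{\mathrm T}\in\mathbb R^{2n}$, and $N+i\Delta_n-iT\Delta_nT^{\mathrm T}\ge0$. Such a channel is called real if $d_{2k}=0$ and $n_{2k-1,2l}=0$ for all $k,l\in\{1,\dots,n\}$, and either $t_{2k,2l-1}=t_{2k,2l}=0$ for all $k,l$, or $t_{2k-1,2l}=t_{2k,2l-1}=0$ for all $k,l$. An $n$-mode Gaussian superchannel is identified with a quadruple $\Phi=\Phi(A,O,Y,\bar{\mathbf d})$ of real $2n\times2n$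 matrices $A,O,Y$ and a vector $\bar{\mathbf d}\in\mathbb R^{2n}$ with $Y=Y^{\mathrm T}$, $OO^{\mathrm T}=I_{2n}$, $Y+i\Delta_n-iA\Delta_nA^{\mathrm T}\ge0$ and $i\Delta_n-iO\Delta_nO^{\mathrm T}\ge0$; it acts on Gaussian channels by $\Phi(\phi(T,N,\mathbf d))=\phi(AT\Sigma_nO^{\mathrm T}\Sigma_n,\ ANA^{\mathrm T}+Y,\ A\mathbf d+\bar{\mathbf d})$. *)

(* Defs.v *)
From HB Require Import structures.
From mathcomp Require Import all_boot all_order all_algebra.
From mathcomp Require Import complex.
Set Implicit Arguments. Unset Strict Implicit. Unset Printing Implicit Defensive.
Import Order.TTheory GRing.Theory Num.Theory.
Local Open Scope ring_scope.

(* Indices: the paper's 1-based index m in {1..2n} is the 0-based ordinal m-1.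
   So paper index 2k-1 (odd) <-> 0-based even ordinal, paper 2k <-> 0-based odd. *)

Section Defs.
Variable R : rcfType.
Variable n : nat.
Local Notation N2 := (2 * n)%N.

(* Delta_n = direct sum of n copies of [[0,1],[-1,0]] *)
Definition Delta : 'M[R]_N2 :=
  \matrix_(i, j)
    (if ~~ odd i && (nat_of_ord j == (nat_of_ord i).+1) then 1
     else if odd i && ((nat_of_ord j).+1 == nat_of_ord i) then -1 else 0).

Definition Sigma : 'M[R]_N2 :=
  \matrix_(i, j) (if i == j then (if odd i then -1 else 1) else 0).

Definition cplx (M : 'M[R]_N2) : 'M[R[i]]_N2 := map_mx (fun x => (x%:C)%C) M.

Definition psdC (H : 'M[R[i]]_N2) : Prop :=
  forall v : 'cV[R[i]]_N2, 0 <= ((map_mx Num.conj v)^T *m H *m v) 0 0.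

Definition psdR (M : 'M[R]_N2) : Prop :=
  forall x : 'cV[R]_N2, 0 <= (x^T *m M *m x) 0 0.

Definition uncert (T N : 'M[R]_N2) : 'M[R[i]]_N2 :=
  cplx N + ('i)%C *: cplx Delta - ('i)%C *: cplx (T *m Delta *m T^T).

Definition gaussian_channel (T N : 'M[R]_N2) (d : 'cV[R]_N2) : Prop :=
  N^T = N /\ psdR N /\ psdC (uncert T N).

Definition real_channel (T N : 'M[R]_N2) (d : 'cV[R]_N2) : Prop :=
  gaussian_channel T N d /\
  (forall i : 'I_N2, odd i -> d i 0 = 0) /\
  (forall i j : 'I_N2, ~~ odd i -> odd j -> N i j = 0) /\
  ((forall i j : 'I_N2, odd i -> T i j = 0) \/
   (forall i j : 'I_N2, odd i != odd j -> T i j = 0)).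

Definition gaussian_superchannel (A O Y : 'M[R]_N2) (db : 'cV[R]_N2) : Prop :=
  Y^T = Y /\ O *m O^T = 1%:M /\ psdC (uncert A Y) /\
  psdC (('i)%C *: cplx Delta - ('i)%C *: cplx (O *m Delta *m O^T)).

Definition act_T (A O T : 'M[R]_N2) : 'M[R]_N2 := A *m T *m Sigma *m O^T *m Sigma.
Definition act_N (A Y N : 'M[R]_N2) : 'M[R]_N2 := A *m N *m A^T + Y.
Definition act_d (A : 'M[R]_N2) (db d : 'cV[R]_N2) : 'cV[R]_N2 := A *m d + db.

Definition imaginarity_breaking (A O Y : 'M[R]_N2) (db : 'cV[R]_N2) : Prop :=
  forall (T N : 'M[R]_N2) (d : 'cV[R]_N2), gaussian_channel T N d ->
    real_channel (act_T A O T) (act_N A Y N) (act_d A db d).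

End Defs.

(* Main.v *)
Require Import Defs.
From HB Require Import structures.
From mathcomp Require Import all_boot all_order all_algebra.
From mathcomp Require Import complex.
From mathcomp Require Import zify.
Import Order.TTheory GRing.Theory Num.Theory.
Local Open Scope ring_scope.

Section S.
Variable R : rcfType.
Variable n : nat.
Local Notation N2 := (2 * n)%N.
Local Notation C := (R[i]).
Local Notation ii := ('i%C : R[i]).

Lemma conj_rc (x : R) : Num.conj (x%:C)%C = (x%:C)%C.
Proof. by rewrite conj_Creal // complex_real. Qed.

Lemma cplx_conj (M : 'M[R]_N2) : map_mx Num.conj (cplx M) = cplx M.
Proof. by apply/matrixP=> i j; rewrite !mxE conj_rc. Qed.

Definition qf (u : 'cV[C]_N2) (H : 'M[C]_N2) (v : 'cV[C]_N2) := (u^T *m H *m v) 0 0.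

Lemma qf_delta a b (H : 'M[C]_N2) : qf (delta_mx a 0) H (delta_mx b 0) = H a b.
Proof. by rewrite /qf trmx_delta -rowE -colE !mxE. Qed.

Lemma qf_zero (H : 'M[C]_N2) : psdC H -> (forall i, H i i = 0) -> H = 0.
Proof.
move=> hp hd; apply/matrixP=> a b; rewrite mxE.
have key t : 0 <= t * H a b + Num.conj t * H b a.
  have := hp (delta_mx a 0 + t *: delta_mx b 0).
  have -> : map_mx Num.conj (delta_mx a 0 + t *: delta_mx b 0 : 'cV[C]_N2) =
            delta_mx a 0 + Num.conj t *: delta_mx b 0.
    by apply/matrixP=> x y; rewrite !mxE rmorphD rmorphM !rmorph_nat.
  have trZ c (M : 'cV[C]_N2) : (c *: M)^T = c *: M^T by apply/matrixP=> x y; rewrite !mxE.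
  have trD (M M' : 'cV[C]_N2) : (M + M')^T = M^T + M'^T by apply/matrixP=> x y; rewrite !mxE.
  rewrite trD trZ !mulmxDl !mulmxDr -!scalemxAl -!scalemxAr.
  have hq (c d : 'I_N2) : ((delta_mx c 0 : 'cV[C]_N2)^T *m H *m (delta_mx d 0 : 'cV[C]_N2)) 0 0 = H c d by rewrite trmx_delta -rowE -colE !mxE.
  rewrite ![fun_of_matrix (_ + _) _ _]mxE ![fun_of_matrix (_ *: _) _ _]mxE ?[fun_of_matrix (_ *: _) _ _]mxE !hq !hd.
  by rewrite !mulr0 add0r addr0.
have e1 := key 1; have e2 := key (-1); have e3 := key ii; have e4 := key (- ii).
have hci : Num.conj ('i%C : R[i]) = - 'i%C by rewrite complexiE conjCi.
move: e1 e2 e3 e4; rewrite ?conjC1 ?rmorphN ?rmorph1 /= !mul1r !mulN1r !hci.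
rewrite !mulNr ?opprK -opprD oppr_ge0 => h1 h2 h3.
rewrite addrC -opprB oppr_ge0 => h4.
have s0 : H b a = - H a b by apply/eqP; rewrite -addr_eq0 addrC eq_le h1 h2.
have s1 : 'i%C * H a b - 'i%C * H b a = 0 by apply/eqP; rewrite eq_le h3 h4.
move: s1; rewrite s0 mulrN opprK -mulr2n => /eqP.
by rewrite mulrn_eq0 /= mulf_eq0 ?(negbTE (neq0Ci _)) ?complexiE ?(negbTE (neq0Ci _)) /= => /eqP.
Qed.

Lemma DeltaT : (Delta R n)^T = - Delta R n.
Proof.
apply/matrixP=> i j; rewrite !mxE.
case: (eqVneq (nat_of_ord i) (nat_of_ord j).+1) => [e|ne].
  rewrite e oddS /=.
  have -> : (j.+2 == j) = false by apply/eqP; lia.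
  have -> : (nat_of_ord j == j.+2) = false by apply/eqP; lia.
  by case: (odd j); rewrite /= ?opprK ?oppr0.
case: (eqVneq (nat_of_ord j) (nat_of_ord i).+1) => [e|ne2].
  rewrite e oddS /=.
  by case: (odd i); rewrite /= ?opprK ?oppr0.
by rewrite !andbF oppr0.
Qed.

Lemma SigmaT : (Sigma R n)^T = Sigma R n.
Proof.
apply/matrixP=> i j; rewrite !mxE eq_sym.
by case: (eqVneq i j) => [->|].
Qed.

Definition sg (i : 'I_N2) : R := if odd i then -1 else 1.

Lemma Sigma_diag : Sigma R n = diag_mx (\row_i sg i).
Proof.
apply/matrixP=> i j; rewrite !mxE /sg.
by case: (eqVneq i j) => [->|]; rewrite ?mulr1n ?mulr0n.
Qed.

Lemma SDS : Sigma R n *m Delta R n *m Sigma R n = - Delta R n.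
Proof.
rewrite Sigma_diag mul_diag_mx mul_mx_diag.
apply/matrixP=> i j; rewrite !mxE /sg.
case: (eqVneq (nat_of_ord j) (nat_of_ord i).+1) => [e|ne].
  rewrite e oddS /=.
  have -> : (i.+2 == i) = false by apply/eqP; lia.
  by case: (odd i) => /=; rewrite ?mulN1r ?mulr1 ?mul1r ?mulr0 ?oppr0 ?opprK.
case: (eqVneq (nat_of_ord i) (nat_of_ord j).+1) => [e|ne2].
  rewrite e oddS /=.
  by case: (odd j) => /=; rewrite ?(mul1r, mul0r, mulr1, mulr0, mulN1r, mulrN1, opprK, oppr0).
by rewrite !andbF !mulr0 mul0r oppr0.
Qed.

Lemma anti_diag (M : 'M[R]_N2) : M^T = - M -> forall i, M i i = 0.
Proof.
move=> h i; have := congr1 (fun X : 'M[R]_N2 => X i i) h; rewrite !mxE => /eqP.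
by rewrite -addr_eq0 -mulr2n mulrn_eq0 /= => /eqP.
Qed.

Lemma trE (F : Type) p q (A : 'M[F]_(p, q)) i j : A^T i j = A j i.
Proof. by rewrite mxE. Qed.
Lemma oppE (F : zmodType) p q (A : 'M[F]_(p, q)) i j : (- A) i j = - A i j.
Proof. by rewrite mxE. Qed.

Lemma addE (F : zmodType) p q (A B : 'M[F]_(p, q)) i j : (A + B) i j = A i j + B i j.
Proof. by rewrite mxE. Qed.
Lemma scaleE (F : pzRingType) p q c (A : 'M[F]_(p, q)) i j : (c *: A) i j = c * A i j.
Proof. by rewrite mxE. Qed.
Lemma mapE (F G : Type) (f : F -> G) p q (A : 'M[F]_(p, q)) i j : (map_mx f A) i j = f (A i j).
Proof. by rewrite mxE. Qed.

Lemma zeroE (F : zmodType) p q i j : (0 : 'M[F]_(p, q)) i j = 0.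
Proof. by rewrite mxE. Qed.

Lemma anti_qf (M : 'M[R]_N2) (x : 'cV[R]_N2) : M^T = - M -> (x^T *m M *m x) 0 0 = 0.
Proof.
move=> h.
have e : (x^T *m M *m x)^T = - (x^T *m M *m x).
  by rewrite !trmx_mul trmxK h ?mulNmx ?mulmxN ?mulNmx mulmxA.
have := congr1 (fun X : 'M[R]_1 => X 0 0) e; rewrite /= trE oppE => /eqP.
by rewrite -addr_eq0 -mulr2n mulrn_eq0 /= => /eqP.
Qed.

Lemma XDX_anti (X : 'M[R]_N2) : (X *m Delta R n *m X^T)^T = - (X *m Delta R n *m X^T).
Proof. by rewrite !trmx_mul trmxK DeltaT ?mulNmx ?mulmxN ?mulNmx mulmxA. Qed.

Lemma map_qf (u v : 'cV[R]_N2) (M : 'M[R]_N2) :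
  (map_mx (real_complex R) u)^T *m cplx M *m map_mx (real_complex R) v
  = map_mx (real_complex R) (u^T *m M *m v).
Proof. by rewrite /cplx map_trmx !map_mxM. Qed.

Lemma psdR_of_psdC (T N : 'M[R]_N2) : psdC (uncert T N) -> psdR N.
Proof.
move=> h x; have := h (map_mx (real_complex R) x).
have -> : map_mx Num.conj (map_mx (real_complex R) x) = map_mx (real_complex R) x.
  by apply/matrixP=> i j; rewrite !mxE conj_rc.
rewrite /uncert mulmxDr mulmxDl mulmxN mulNmx mulmxDr mulmxDl.
rewrite -!scalemxAr -!scalemxAl !map_qf !addE !oppE !scaleE !mapE.
by rewrite (anti_qf _ _ DeltaT) (anti_qf _ _ (XDX_anti _)) !mulr0 subr0 addr0 ler0c.
Qed.

Lemma symplectic (O : 'M[R]_N2) :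
  psdC (('i)%C *: cplx (Delta R n) - ('i)%C *: cplx (O *m Delta R n *m O^T)) ->
  O *m Delta R n *m O^T = Delta R n.
Proof.
move=> hp.
have H0 := qf_zero _ hp.
have /H0 : forall i, ('i%C *: cplx (Delta R n) - 'i%C *: cplx (O *m Delta R n *m O^T)) i i = 0.
  move=> i; rewrite addE oppE !scaleE !mapE (anti_diag _ DeltaT) (anti_diag _ (XDX_anti O)).
  by rewrite rmorph0 mulr0 subrr.
move=> {}H0; apply/matrixP=> i j.
have := congr1 (fun X : 'M[C]_N2 => X i j) H0; rewrite /= addE oppE !scaleE !mapE zeroE.
by move/eqP; rewrite subr_eq0 => /eqP /(mulfI (neq0Ci _)) /complexI.
Qed.

Lemma zmod_id (V : zmodType) (P Q S y D : V) : P + y + D - S = P + Q - S + (y + D - Q).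
Proof.
rewrite [y + D - Q]addrC addrA (addrAC P Q (- S)) addrK.
by rewrite -addrA (addrC (- S)) !addrA.
Qed.

Lemma OTDO (O : 'M[R]_N2) : O *m O^T = 1%:M -> O *m Delta R n *m O^T = Delta R n ->
  O^T *m Delta R n *m O = Delta R n.
Proof.
move=> hO hs; have h1 := mulmx1C hO.
by rewrite -{1}hs !mulmxA h1 mul1mx -mulmxA h1 mulmx1.
Qed.

Lemma mid (O : 'M[R]_N2) : O *m O^T = 1%:M -> O *m Delta R n *m O^T = Delta R n ->
  forall B : 'M[R]_N2, Sigma R n *m (O^T *m (Sigma R n *m (Delta R n *m (Sigma R n *m (O *m (Sigma R n *m B))))))
   = Delta R n *m B.
Proof.
move=> hO hs B.
have SDS' X : Sigma R n *m (Delta R n *m (Sigma R n *m X)) = - (Delta R n *m X).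
  by rewrite !mulmxA SDS mulNmx.
have OTDO' X : O^T *m (Delta R n *m (O *m X)) = Delta R n *m X.
  by rewrite !mulmxA (OTDO _ hO hs).
by rewrite SDS' !mulmxN OTDO' SDS' opprK.
Qed.

Lemma TDT (A O T : 'M[R]_N2) : O *m O^T = 1%:M -> O *m Delta R n *m O^T = Delta R n ->
  act_T A O T *m Delta R n *m (act_T A O T)^T = A *m (T *m Delta R n *m T^T) *m A^T.
Proof.
move=> hO hs; rewrite /act_T !trmx_mul !trmxK SigmaT -!mulmxA (mid _ hO hs).
by [].
Qed.

Lemma uncert_act (A O T N Y : 'M[R]_N2) : O *m O^T = 1%:M -> O *m Delta R n *m O^T = Delta R n ->
  uncert (act_T A O T) (act_N A Y N) = cplx A *m uncert T N *m (cplx A)^T + uncert A Y.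
Proof.
move=> hO hs; rewrite /uncert (TDT _ _ _ hO hs) /act_N /cplx.
rewrite !map_mxD !map_mxM !mulmxDr !mulmxDl !mulmxN !mulNmx -!scalemxAr -!scalemxAl -!map_trmx.
exact: zmod_id.
Qed.

Lemma psdC_add (H1 H2 : 'M[C]_N2) : psdC H1 -> psdC H2 -> psdC (H1 + H2).
Proof.
move=> h1 h2 v; rewrite mulmxDr mulmxDl addE.
exact: addr_ge0.
Qed.

Lemma psdC_conj (X : 'M[R]_N2) (H : 'M[C]_N2) : psdC H -> psdC (cplx X *m H *m (cplx X)^T).
Proof.
move=> h v; have := h ((cplx X)^T *m v).
rewrite (map_mxM (Num.conj : {rmorphism C -> C})) -map_trmx cplx_conj trmx_mul trmxK.
by rewrite !mulmxA.
Qed.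

Lemma trD (F : zmodType) p q (M M' : 'M[F]_(p, q)) : (M + M')^T = M^T + M'^T.
Proof. by apply/matrixP=> x y; rewrite !mxE. Qed.

Lemma rowzero (A M : 'M[R]_N2) i j : (forall k, A i k = 0) -> (A *m M) i j = 0.
Proof. by move=> h; rewrite mxE big1 // => k _; rewrite h mul0r. Qed.

Lemma rowzero_c (A : 'M[R]_N2) (M : 'cV[R]_N2) i j : (forall k, A i k = 0) -> (A *m M) i j = 0.
Proof. by move=> h; rewrite mxE big1 // => k _; rewrite h mul0r. Qed.

Lemma gc1 (d : 'cV[R]_N2) : gaussian_channel 1%:M 0 d.
Proof.
split; first by rewrite trmx0.
split; first by move=> x; rewrite mulmx0 mul0mx zeroE.
have -> : uncert (R:=R) (n:=n) 1%:M 0 = 0.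
  by rewrite /uncert mul1mx trmx1 mulmx1 /cplx map_mx0 add0r subrr.
by move=> v; rewrite mulmx0 mul0mx zeroE.
Qed.
End S.
Arguments symplectic {R n}.
Arguments gc1 {R n}.
Arguments uncert_act {R n}.
Arguments psdC_add {R n}.
Arguments psdC_conj {R n}.
Arguments psdR_of_psdC {R n}.
Arguments rowzero {R n}.
Arguments rowzero_c {R n}.

Theorem theorem2 (R : rcfType) (n : nat) (hn : (1 <= n)%N)
  (A O Y : 'M[R]_(2 * n)) (db : 'cV[R]_(2 * n)) :
  gaussian_superchannel A O Y db ->
  (imaginarity_breaking A O Y db <->
   ((forall i : 'I_(2 * n), odd i -> db i 0 = 0) /\
    (forall i j : 'I_(2 * n), ~~ odd i -> odd j -> Y i j = 0) /\
    (forall i j : 'I_(2 * n), odd i -> A i j = 0))).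
Proof.
move=> [hYs [hO [hAY hOs]]].
have hs := symplectic _ hOs.
split.
  move=> hib.
  have [_ [hd [hN _]]] := hib _ _ _ (gc1 (0 : 'cV[R]_(2 * n))).
  have hdb : forall i : 'I_(2 * n), odd i -> db i 0 = 0.
    move=> i hi; have := hd i hi.
    by rewrite /act_d mulmx0 add0r.
  split; first exact: hdb.
  split.
    move=> i j hi hj; have := hN i j hi hj.
    by rewrite /act_N mulmx0 mul0mx add0r.
  move=> i j hi.
  have [_ [hd' _]] := hib _ _ _ (gc1 (delta_mx j 0)).
  have := hd' i hi; rewrite /act_d -colE addE mxE.
  by rewrite (hdb i hi) addr0.
move=> [hdb [hY hA]] T N d [hNs [hNR hNC]].
have hC : psdC (uncert (act_T A O T) (act_N A Y N)).
  rewrite (uncert_act _ _ _ _ _ hO hs).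
  apply: psdC_add hAY; exact: psdC_conj.
split.
  split.
    by rewrite /act_N trD !trmx_mul trmxK hNs hYs mulmxA.
  split; last exact: hC.
  exact: psdR_of_psdC hC.
split.
  move=> i hi; rewrite /act_d addE hdb // addr0.
  by apply: rowzero_c => k; apply: hA.
split.
  move=> i j hi hj; rewrite /act_N addE (hY i j hi hj) addr0.
  rewrite mxE big1 // => k _; rewrite trE (hA j k hj) mulr0 //.
left=> i j hi; rewrite /act_T -!mulmxA.
by apply: rowzero => k; apply: hA.
Qed.
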